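(* Let $w(\tau):=\left(e^{-3\tau}-\dfrac{4e^{-6\tau}}{(e^{-\tau}+1)^3}\right)1_{(0,\infty)}(\tau)$ for $\tau\in\mathbb{R}$. Then the Fourier transform $\hat w(\xi)=\int_{\mathbb{R}}w(\tau)e^{-i\xi\tau}\,d\tau$ has no zeroes on $\mathbb{R}$. *)

(* Defs.v *)
From Stdlib Require Import Reals.
From Coquelicot Require Import Coquelicot.
Open Scope R_scope.

Definition ind_pos (t : R) : R := if Rlt_dec 0 t then 1 else 0.

Definition w (t : R) : R :=
  (exp (-3 * t) - 4 * exp (-6 * t) / (exp (- t) + 1) ^ 3) * ind_pos t.

Definition cexpi (theta : R) : C := (cos theta, sin theta).

Definition fourier_integrand (xi : R) (t : R) : C :=
  Cmult (RtoC (w t)) (cexpi (- (xi * t))).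

(* Main.v *)
Require Import Defs.
From Stdlib Require Import Reals Lra Psatz.
From Coquelicot Require Import Coquelicot.
Open Scope R_scope.

Definition v (t : R) : R := exp (-3 * t) - 4 * exp (-6 * t) / (exp (- t) + 1) ^ 3.
Definition dv (t : R) : R :=
  -3 * exp (-3 * t) + 24 * exp (-6 * t) / (exp (- t) + 1) ^ 3
  - 12 * exp (-7 * t) / (exp (- t) + 1) ^ 4.

Lemma e3 t : exp (-3 * t) = exp (- t) ^ 3.
Proof. replace (-3 * t) with (-t + (-t + -t)) by ring. rewrite !exp_plus; ring. Qed.
Lemma e6 t : exp (-6 * t) = exp (- t) ^ 6.
Proof. replace (-6 * t) with (-3*t + -3*t) by ring. rewrite exp_plus, e3; ring. Qed.
Lemma e7 t : exp (-7 * t) = exp (- t) ^ 7.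
Proof. replace (-7 * t) with (-6*t + -t) by ring. rewrite exp_plus, e6; ring. Qed.

Lemma x_bounds t : 0 <= t -> 0 < exp (- t) <= 1.
Proof. intros. split. apply exp_pos. rewrite <- exp_0. destruct (Req_dec t 0).
 subst. rewrite Ropp_0. lra. left. apply exp_increasing. lra. Qed.

Lemma v_bounds t : 0 <= t -> exp (-3 * t) / 2 <= v t <= exp (-3 * t).
Proof. intros Ht. unfold v. rewrite e3, e6. destruct (x_bounds t Ht) as [H0 H1].
 set (x := exp (- t)) in *.
 assert (Hd : 0 < (x+1)^3) by (apply pow_lt; lra).
 assert (Q : 0 <= 4 * x^6 / (x+1)^3 <= x^3/2).
 { split. apply Rdiv_le_0_compat; [|lra]. assert (0 < x^6) by (apply pow_lt; lra). lra.
   apply Rle_div_l. lra. assert (0<x^3) by (apply pow_lt; lra).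
   assert (8*x^3 <= (x+1)^3) by nra. nra. }
 lra. Qed.

Lemma dv_bound t : 0 <= t -> 3/16 * exp (-3 * t) <= - dv t.
Proof. intros Ht. unfold dv. rewrite e3, e6, e7. destruct (x_bounds t Ht) as [H0 H1].
 set (x := exp (- t)) in *.
 assert (Hd : 0 < (x+1)^4) by (apply pow_lt; lra).
 assert (E : - (-3 * x ^ 3 + 24 * x ^ 6 / (x + 1) ^ 3 - 12 * x ^ 7 / (x + 1) ^ 4)
   = 3 * x^3 * (((x+1)^4 - 8*x^3*(x+1) + 4*x^4) / (x+1)^4)).
 { field. lra. }
 rewrite E.
 assert (1/16 <= ((x+1)^4 - 8*x^3*(x+1) + 4*x^4) / (x+1)^4).
 { assert ((x+1)^4 <= 16) by (assert (x+1 <= 2) by lra; replace 16 with (2^4) by ring; apply pow_incr; lra).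
   assert (0 <= x^3) by (apply pow_le; lra). assert (x^4 <= x^2) by nra. assert (x^3 <= x) by nra.
   replace ((x+1)^4 - 8*x^3*(x+1) + 4*x^4) with (1+4*x+6*x^2-4*x^3-3*x^4) by ring.
   assert (0 <= x^2) by nra.
   assert (Hy : (x+1)^4 * / (x+1)^4 = 1) by (field; lra).
   assert (0 < / (x+1)^4) by (apply Rinv_0_lt_compat; lra).
   unfold Rdiv. set (y := / (x+1)^4) in *. set (N := 1+4*x+6*x^2-4*x^3-3*x^4).
   assert (1 <= N) by (unfold N; lra). nra. }
 assert (0 < x^3) by (apply pow_lt; lra). nra. Qed.

Lemma v_derive t : is_derive v t (dv t).
Proof. unfold v, dv. assert (0 < exp (-t)) by apply exp_pos. auto_derive.
 - assert (0 < (exp (- t) + 1) * ((exp (- t) + 1) * ((exp (- t) + 1) * 1))).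
   { repeat apply Rmult_lt_0_compat; lra. } lra.
 - match goal with |- ?a = ?b => change (@eq R a b) end.
   rewrite !e3, !e6, !e7. set (x := exp (-t)) in *. field. lra.
Qed.

Ltac toR := match goal with |- ?a = ?b => change (@eq R a b) end.

Lemma v_exd t : ex_derive v t.
Proof. exists (dv t). apply v_derive. Qed.

Lemma cont1 xi t : continuous (fun t => v t * cos (- (xi * t))) t.
Proof. apply (@ex_derive_continuous R_AbsRing R_NormedModule). auto_derive. apply v_exd. Qed.
Lemma cont2 xi t : continuous (fun t => v t * sin (- (xi * t))) t.
Proof. apply (@ex_derive_continuous R_AbsRing R_NormedModule). auto_derive. apply v_exd. Qed.

Lemma ball_R (x y e : R) : Rabs (y - x) < e -> ball x e y.
Proof. intros H. unfold ball; simpl. unfold AbsRing_ball. simpl. exact H. Qed.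

Lemma int_exp u b : RInt (fun t => exp (-3 * t)) u b = exp (-3 * u) / 3 - exp (-3 * b) / 3.
Proof.
  apply is_RInt_unique.
  replace (exp (-3 * u) / 3 - exp (-3 * b) / 3) with (minus ((fun t => - exp (-3 * t) / 3) b) ((fun t => - exp (-3 * t) / 3) u)).
  2:{ unfold minus, plus, opp; simpl. toR. lra. }
  apply (is_RInt_derive (V:=R_CompleteNormedModule) (fun t => - exp (-3 * t) / 3) (fun t => exp (-3 * t))).
  - intros x _. auto_derive. auto. field.
  - intros x _. apply (@ex_derive_continuous R_AbsRing R_NormedModule). auto_derive. auto.
Qed.

Lemma ex_cont (f : R -> R) a b : (forall t, continuous f t) -> ex_RInt f a b.
Proof. intros H. apply (@ex_RInt_continuous R_CompleteNormedModule). intros; apply H. Qed.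

Lemma tail_bound (f : R -> R) u b : (forall t, continuous f t) ->
  (forall t, 0 <= t -> Rabs (f t) <= exp (-3 * t)) -> 0 <= u <= b ->
  Rabs (RInt f 0 b - RInt f 0 u) <= exp (-3 * u) / 3.
Proof.
  intros Hc Hb Hu.
  rewrite <- (RInt_Chasles f 0 u b) by (apply ex_cont; auto).
  replace (plus (RInt f 0 u) (RInt f u b) - RInt f 0 u) with (RInt f u b).
  2:{ unfold plus; simpl. set (p := RInt f 0 u). set (q := RInt f u b). clearbody p q. change R in p, q. toR. ring. }
  eapply Rle_trans. apply abs_RInt_le. lra. apply ex_cont; auto.
  eapply Rle_trans. apply (RInt_le _ (fun t => exp (-3 * t))). lra.
  - apply (@ex_RInt_continuous R_CompleteNormedModule). intros; apply (continuous_comp f Rabs). auto. apply continuous_Rabs.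
  - apply ex_cont. intros. apply (@ex_derive_continuous R_AbsRing R_NormedModule). auto_derive. auto.
  - intros x Hx. apply Hb. lra.
  - rewrite int_exp. assert (0 < exp (-3 * b)) by apply exp_pos. lra.
Qed.

Lemma lim_exists (f : R -> R) : (forall t, continuous f t) ->
  (forall t, 0 <= t -> Rabs (f t) <= exp (-3 * t)) ->
  exists L, filterlim (fun b => RInt f 0 b) (Rbar_locally p_infty) (locally L).
Proof.
  intros Hc Hb.
  apply (filterlim_locally_cauchy (U := R_CompleteSpace)).
  intros eps. set (M := Rmax 0 (- ln eps / 3)).
  exists (fun b => M < b). split. exists M. auto.
  intros u b Hu Hb'.
  assert (K : forall u b, M < u -> u <= b -> Rabs (RInt f 0 b - RInt f 0 u) < eps).
  { clear u b Hu Hb'. intros u b Hu Hub.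
    assert (0 <= u) by (pose proof (Rmax_l 0 (- ln eps / 3)); unfold M in *; lra).
    eapply Rle_lt_trans. apply tail_bound; auto; lra.
    assert (- ln eps / 3 < u) by (pose proof (Rmax_r 0 (- ln eps / 3)); unfold M in *; lra).
    assert (exp (-3 * u) < eps).
    { rewrite <- (exp_ln eps) by (apply cond_pos). apply exp_increasing. lra. }
    pose proof (exp_pos (-3 * u)). lra. }
  apply ball_R. destruct (Rle_dec u b).
  - apply K; auto.
  - rewrite Rabs_minus_sym. apply K; auto; lra.
Qed.

Lemma lim_ge (f : R -> R) L k c M : filterlim f (Rbar_locally p_infty) (locally L) ->
  (forall b, M <= b -> c <= k * f b) -> c <= k * L.
Proof.
  intros Hl Hf. destruct (Rle_dec c (k * L)) as [|Hn]; auto. exfalso. apply Rnot_le_lt in Hn.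
  assert (He : 0 < (c - k * L) / (Rabs k + 1)).
  { apply Rdiv_lt_0_compat. lra. pose proof (Rabs_pos k). lra. }
  destruct (proj1 (filterlim_locally f L) Hl (mkposreal _ He)) as [N HN].
  set (b := Rmax M (N + 1)).
  assert (Hb1 : M <= b) by apply Rmax_l. assert (Hb2 : N < b) by (pose proof (Rmax_r M (N+1)); unfold b in *; lra).
  specialize (HN b Hb2). specialize (Hf b Hb1).
  unfold ball in HN; simpl in HN; unfold AbsRing_ball, abs, minus, plus, opp in HN; simpl in HN. change (f b + - L) with (f b - L) in HN.
  assert (k * (f b - L) <= Rabs k * Rabs (f b - L)) by (rewrite <- Rabs_mult; apply Rle_abs).
  assert (Rabs k * Rabs (f b - L) <= Rabs k * ((c - k * L) / (Rabs k + 1))).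
  { apply Rmult_le_compat_l. apply Rabs_pos. lra. }
  assert (Rabs k * ((c - k * L) / (Rabs k + 1)) < (c - k * L)).
  { pose proof (Rabs_pos k). assert (0 < c - k * L) by lra. set (d := c - k * L) in *.
    replace (Rabs k * (d / (Rabs k + 1))) with (d - d / (Rabs k + 1)) by (field; lra).
    assert (0 < d / (Rabs k + 1)) by (apply Rdiv_lt_0_compat; lra). lra. }
  lra.
Qed.

Ltac nzpos := repeat match goal with |- _ /\ _ => split end; try exact I;
  apply Rgt_not_eq; repeat apply Rmult_lt_0_compat; lra.

Lemma dv_exd t : ex_derive dv t.
Proof. unfold dv. assert (0 < exp (-t)) by apply exp_pos. auto_derive. nzpos. Qed.

Ltac contR := intros; apply (@ex_derive_continuous R_AbsRing R_NormedModule);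
  auto_derive; repeat split; first [apply v_exd | apply dv_exd | exact I].

Lemma ex_c (f : R -> R) a b : (forall t, continuous f t) -> ex_RInt f a b.
Proof. apply ex_cont. Qed.

Section S.
Variable xi : R.
Definition fi t := v t * sin (- (xi * t)).
Definition PP t := v t * (1 - cos (xi * t)).
Definition gg t := dv t * (1 - cos (xi * t)).
Definition vs t := v t * (xi * sin (xi * t)).
Definition hh t := - (3/16) * exp (-3 * t) * (1 - cos (xi * t)).
Definition Hanti t := - (3/16) * (- exp (-3 * t) / 3 - exp (-3 * t) * (xi * sin (xi * t) - 3 * cos (xi * t)) / (9 + xi ^ 2)).

Lemma cfi t : continuous fi t. Proof. unfold fi. contR. Qed.
Lemma cg t : continuous gg t. Proof. unfold gg. contR. Qed.
Lemma cvs t : continuous vs t. Proof. unfold vs. contR. Qed.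
Lemma ch t : continuous hh t. Proof. unfold hh. contR. Qed.

Lemma myE1 b : RInt vs 0 b = (- xi) * RInt fi 0 b.
Proof.
  rewrite (RInt_ext (V:=R_CompleteNormedModule) vs (fun t => scal (- xi) (fi t))).
  - apply (RInt_scal (V:=R_CompleteNormedModule) fi 0 b (-xi)). apply ex_c, cfi.
  - intros x _. unfold scal; simpl; unfold mult; simpl. unfold vs, fi. rewrite sin_neg. ring.
Qed.

Lemma myE2 b : RInt gg 0 b + RInt vs 0 b = PP b.
Proof.
  assert (R1 : RInt (fun t => plus (gg t) (vs t)) 0 b = PP b).
  { apply is_RInt_unique.
    replace (PP b) with (minus (PP b) (PP 0)).
    2:{ unfold minus, plus, opp; simpl. unfold PP. rewrite Rmult_0_r, cos_0. toR. ring. }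
    apply (is_RInt_derive (V:=R_CompleteNormedModule) PP).
    - intros x _. unfold PP, gg, vs, plus; simpl. auto_derive. apply v_exd.
      replace (Derive (fun x0 => v x0) x) with (dv x) by (symmetry; apply is_derive_unique, v_derive). toR. ring.
    - intros x _. unfold plus; simpl. unfold gg, vs. contR. }
  assert (R2 : RInt (fun t => plus (gg t) (vs t)) 0 b = plus (RInt gg 0 b) (RInt vs 0 b))
    by (apply (RInt_plus (V:=R_CompleteNormedModule)); apply ex_c; [apply cg|apply cvs]).
  transitivity (RInt (fun t => plus (gg t) (vs t)) 0 b). symmetry; exact R2. exact R1.
Qed.

Lemma P_ge b : 0 <= b -> 0 <= PP b.
Proof. intros Hb. unfold PP. pose proof (v_bounds b Hb). pose proof (exp_pos (-3 * b)).
  pose proof (COS_bound (xi * b)). apply Rmult_le_pos; lra. Qed.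

Lemma myE3 b0 b : 0 <= b0 <= b -> RInt gg 0 b <= RInt hh 0 b0.
Proof.
  intros Hb.
  rewrite <- (RInt_Chasles gg 0 b0 b) by (apply ex_c, cg).
  assert (RInt gg b0 b <= 0).
  { replace 0 with (RInt (fun _ => 0) b0 b).
    2:{ rewrite RInt_const. unfold scal; simpl; unfold mult; simpl. toR. ring. }
    apply RInt_le. lra. apply ex_c, cg. apply ex_c. intros; apply continuous_const.
    intros x Hx. unfold gg. pose proof (dv_bound x ltac:(lra)). pose proof (exp_pos (-3 * x)).
    pose proof (COS_bound (xi * x)). assert (0 <= 1 - cos (xi * x)) by lra. nra. }
  assert (RInt gg 0 b0 <= RInt hh 0 b0).
  { apply RInt_le. lra. apply ex_c, cg. apply ex_c, ch.
    intros x Hx. unfold gg, hh. pose proof (dv_bound x ltac:(lra)).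
    pose proof (COS_bound (xi * x)). assert (0 <= 1 - cos (xi * x)) by lra. nra. }
  unfold plus; simpl. lra.
Qed.

Lemma myE4 b0 : RInt hh 0 b0 = Hanti b0 - Hanti 0.
Proof.
  apply is_RInt_unique.
  replace (Hanti b0 - Hanti 0) with (minus (Hanti b0) (Hanti 0)) by reflexivity.
  apply (is_RInt_derive (V:=R_CompleteNormedModule) Hanti).
  - intros x _. unfold Hanti, hh. auto_derive.
    + exact I.
    + assert (0 <= xi * xi) by nra. toR. field. lra.
  - intros. apply ch.
Qed.

End S.

Lemma im_bound xi : xi <> 0 -> exists c M, 0 < c /\ forall b, M <= b -> c <= (- xi) * RInt (fi xi) 0 b.
Proof.
  intros Hxi.
  assert (Ha : 0 < Rabs xi) by (apply Rabs_pos_lt; auto).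
  set (b0 := 2 * PI / Rabs xi).
  assert (Hb0 : 0 < b0) by (unfold b0; apply Rdiv_lt_0_compat; [pose proof PI_RGT_0; lra | auto]).
  assert (Hcs : cos (xi * b0) = 1 /\ sin (xi * b0) = 0).
  { unfold b0. destruct (Rle_dec 0 xi).
    - rewrite Rabs_pos_eq by lra. replace (xi * (2 * PI / xi)) with (2 * PI) by (field; auto).
      split; [apply cos_2PI | apply sin_2PI].
    - rewrite Rabs_left by lra. replace (xi * (2 * PI / - xi)) with (- (2 * PI)) by (field; auto).
      rewrite cos_neg, sin_neg, cos_2PI, sin_2PI. split; [reflexivity | ring]. }
  exists (- (Hanti xi b0 - Hanti xi 0)), b0. split.
  - unfold Hanti. destruct Hcs as [Hc Hs]. rewrite Hc, Hs. rewrite Rmult_0_r, Rmult_0_r, cos_0, sin_0.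
    replace (-3 * 0) with 0 by ring. rewrite exp_0.
    assert (He : exp (-3 * b0) < 1) by (rewrite <- exp_0; apply exp_increasing; lra).
    pose proof (exp_pos (-3 * b0)).
    set (e := exp (-3 * b0)) in *.
    assert (0 < xi * xi) by (assert (xi < 0 \/ 0 < xi) by lra; nra).
    assert (xi ^ 2 = xi * xi) by ring.
    match goal with |- 0 < ?X => replace X with ((3/16) * (1 - e) * (xi * xi / (3 * (9 + xi * xi)))) by (field; lra) end.
    apply Rmult_lt_0_compat. lra. apply Rdiv_lt_0_compat; lra.
  - intros b Hb.
    rewrite <- (myE1 xi b). pose proof (myE2 xi b) as Q1. pose proof (P_ge xi b ltac:(lra)) as Q2.
    pose proof (myE3 xi b0 b ltac:(lra)) as Q3. rewrite myE4 in Q3. lra.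
Qed.

Definition fr xi t := v t * cos (- (xi * t)).

Lemma re_bound : exists c M, 0 < c /\ forall b, M <= b -> c <= 1 * RInt (fr 0) 0 b.
Proof.
  exists ((1 - exp (-3)) / 6), 1. split.
  - assert (exp (-3) < 1) by (rewrite <- exp_0; apply exp_increasing; lra). lra.
  - intros b Hb. rewrite Rmult_1_l.
    assert (Hc : forall t, continuous (fr 0) t) by (unfold fr; contR).
    rewrite <- (RInt_Chasles (fr 0) 0 1 b) by (apply ex_c; auto).
    assert (0 <= RInt (fr 0) 1 b).
    { apply RInt_ge_0. lra. apply ex_c; auto. intros x Hx. unfold fr.
      rewrite Rmult_0_l, Ropp_0, cos_0, Rmult_1_r. pose proof (v_bounds x ltac:(lra)).
      pose proof (exp_pos (-3 * x)). lra. }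
    assert (RInt (fun t => exp (-3 * t)) 0 1 <= RInt (fun t => 2 * fr 0 t) 0 1).
    { apply RInt_le. lra. apply ex_c. contR. apply ex_c. unfold fr; contR.
      intros x Hx. unfold fr.
      rewrite Rmult_0_l, Ropp_0, cos_0, Rmult_1_r. pose proof (v_bounds x ltac:(lra)). lra. }
    assert (E : RInt (fun t => 2 * fr 0 t) 0 1 = 2 * RInt (fr 0) 0 1).
    { apply (RInt_scal (V:=R_CompleteNormedModule) (fr 0) 0 1 2). apply ex_c; auto. }
    rewrite E, int_exp in H0. replace (-3 * 0) with 0 in H0 by ring. replace (-3 * 1) with (-3) in H0 by ring.
    rewrite exp_0 in H0. unfold plus; simpl. lra.
Qed.

Lemma fr_bound xi t : 0 <= t -> Rabs (fr xi t) <= exp (-3 * t).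
Proof. intros Ht. unfold fr. pose proof (v_bounds t Ht). pose proof (exp_pos (-3*t)).
  rewrite Rabs_mult, (Rabs_pos_eq (v t)) by lra. pose proof (COS_bound (- (xi * t))).
  assert (Rabs (cos (- (xi * t))) <= 1) by (apply Rabs_le; lra). nra. Qed.
Lemma fi_bound xi t : 0 <= t -> Rabs (fi xi t) <= exp (-3 * t).
Proof. intros Ht. unfold fi. pose proof (v_bounds t Ht). pose proof (exp_pos (-3*t)).
  rewrite Rabs_mult, (Rabs_pos_eq (v t)) by lra. pose proof (SIN_bound (- (xi * t))).
  assert (Rabs (sin (- (xi * t))) <= 1) by (apply Rabs_le; lra). nra. Qed.

Theorem proposition4p2 :
  forall xi : R,
    exists l : C,
      is_RInt_gen (fourier_integrand xi)
        (Rbar_locally m_infty) (Rbar_locally p_infty) l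
      /\ l <> 0%C.
Proof.
  intros xi.
  destruct (lim_exists (fr xi)) as [Lr HLr].
  { unfold fr. contR. } { apply fr_bound. }
  destruct (lim_exists (fi xi)) as [Li HLi].
  { apply cfi. } { apply fi_bound. }
  exists (Lr, Li). split.
  - unfold is_RInt_gen, filterlimi, filter_le, filtermapi. intros Q [eps HQ].
    destruct (proj1 (filterlim_locally _ _) HLr eps) as [M1 HM1].
    destruct (proj1 (filterlim_locally _ _) HLi eps) as [M2 HM2].
    exists (fun a => a < 0) (fun b => Rmax 0 (Rmax M1 M2) < b).
    + exists 0. auto.
    + exists (Rmax 0 (Rmax M1 M2)). auto.
    + intros a b Ha Hb. simpl.
      pose proof (Rmax_l 0 (Rmax M1 M2)). pose proof (Rmax_r 0 (Rmax M1 M2)).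
      pose proof (Rmax_l M1 M2). pose proof (Rmax_r M1 M2).
      exists (RInt (fr xi) 0 b, RInt (fi xi) 0 b). split.
      * assert (K1 : is_RInt (V:=prod_NormedModule R_AbsRing R_NormedModule R_NormedModule) (fourier_integrand xi) a 0 zero).
        2: assert (K2 : is_RInt (V:=prod_NormedModule R_AbsRing R_NormedModule R_NormedModule) (fourier_integrand xi) 0 b (RInt (fr xi) 0 b, RInt (fi xi) 0 b)).
        3: pose proof (is_RInt_Chasles _ _ _ _ _ _ K1 K2) as K3; rewrite plus_zero_l in K3; exact K3.
        -- apply (is_RInt_ext (fun _ => zero)).
           ++ intros x Hx. rewrite Rmin_left in Hx by lra. rewrite Rmax_right in Hx by lra.
              unfold fourier_integrand, w, ind_pos. destruct (Rlt_dec 0 x); [lra|].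
              unfold Cmult, RtoC; simpl. apply injective_projections; simpl; unfold zero; simpl; toR; ring.
           ++ pose proof (is_RInt_const (V := prod_NormedModule R_AbsRing R_NormedModule R_NormedModule) a 0 zero) as K.
              rewrite (@scal_zero_r R_Ring (NormedModule.ModuleSpace R_AbsRing (prod_NormedModule R_AbsRing R_NormedModule R_NormedModule))) in K. exact K.
        -- apply is_RInt_fct_extend_pair.
           ++ apply (is_RInt_ext (fr xi)).
              ** intros x Hx. rewrite Rmin_left in Hx by lra. rewrite Rmax_right in Hx by lra.
                 unfold fourier_integrand, w, ind_pos, fr, v. destruct (Rlt_dec 0 x); [|lra].
                 unfold Cmult, RtoC, cexpi; simpl. toR. ring.
              ** apply (RInt_correct (V:=R_CompleteNormedModule)). apply ex_c. unfold fr; contR.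
           ++ apply (is_RInt_ext (fi xi)).
              ** intros x Hx. rewrite Rmin_left in Hx by lra. rewrite Rmax_right in Hx by lra.
                 unfold fourier_integrand, w, ind_pos, fi, v. destruct (Rlt_dec 0 x); [|lra].
                 unfold Cmult, RtoC, cexpi; simpl. toR. ring.
              ** apply (RInt_correct (V:=R_CompleteNormedModule)). apply ex_c. apply cfi.
      * apply HQ. split; simpl; [apply HM1 | apply HM2]; lra.
  - intros Heq.
    assert (Hr : Lr = 0) by exact (f_equal fst Heq).
    assert (Hi : Li = 0) by exact (f_equal snd Heq).
    destruct (Req_dec xi 0) as [Hx|Hx].
    + subst xi. destruct re_bound as [c [M [Hc HM]]].
      pose proof (lim_ge _ _ _ _ _ HLr HM). lra.
    + destruct (im_bound xi Hx) as [c [M [Hc HM]]].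
      pose proof (lim_ge _ _ _ _ _ HLi HM). rewrite Hi in H. lra.
Qed.
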